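(* Let $F$ be a field of characteristic $0$, let $k$ be a positive integer and $1\le t\le k$, and let $m,l_1,\dots,l_t$ be non-negative integers with $n=l_1+\cdots+l_t+m$. Let $\psi\colon V_n\to V_{m,l_1,\dots,l_t}$ be the linear isomorphism induced by the substitution $x_i\mapsto x^{1}_{i}$ if $1\le i\le l_1$; $x_i\mapsto x^{2}_{i-l_1}$ if $l_1+1\le i\le l_1+l_2$; $\dots$; $x_i\mapsto x^{t}_{i-(l_1+\cdots+l_{t-1})}$ if $l_1+\cdots+l_{t-1}+1\le i\le l_1+\cdots+l_t$; and $x_i\mapsto z_{i-(l_1+\cdots+l_t)}$ otherwise. Then: (1) $\psi(V_n\cap T(E))=V_{m,l_1,\dots,l_t}\cap T_{\mathbb{Z}}(E^{\infty})$; (2) if $1\cdot l_1+2\cdot l_2+\cdots+t\cdot l_t\le k$, then $\psi(V_n\cap T(E))=V_{m,l_1,\dots,l_t}\cap T_{\mathbb{Z}}(E^{k^\ast})$.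
   Context: $L$ is a vector space over $F$ with basis $e_1,e_2,\dots$, and $E$ is its unital Grassmann algebra (basis $1$ and $e_{i_1}\cdots e_{i_k}$, $i_1<\cdots<i_k$, with $e_ie_j=-e_je_i$). A $\mathbb{Z}$-grading on $E$ is induced by assigning degrees to the $e_i$ and giving a basis monomial the sum of the degrees of its factors ($1$ has degree $0$). $E^{k^\ast}$: $\|e_i\|=1$ for $i=1,\dots,k$ and $\|e_i\|=0$ for $i>k$. $E^{\infty}$: $\|e_i\|=0$ for $i$ even and $\|e_i\|=1$ for $i$ odd. $T(E)$ is the set of ordinary polynomial identities of $E$ in the free associative algebra, and $V_n$ is the space of multilinear polynomials in $x_1,\dots,x_n$. $F\langle X|\mathbb{Z}\rangle$ is the free unital associative algebra on variables each of which has an integer degree $\alpha(x)$ (countably many of each degree); $f(x_1,\dots,x_r)$ is a $\mathbb{Z}$-graded identity of a $\mathbb{Z}$-graded algebra $A$ if it vanishes whenever each $x_j$ is replaced by an element of $A_{\alpha(x_j)}$; $T_{\mathbb{Z}}(A)$ is the set of such. $V_{m,l_1,\dots,l_t}$ is the space of multilinear graded polynomials in the variables $z_1,\dots,z_m$ of degree $0$, $x^1_1,\dots,x^1_{l_1}$ of degree $1$, $\dots$, $x^t_1,\dots,x^t_{l_t}$ of degree $t$. *)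

(* Defs.v *)
From HB Require Import structures.
From mathcomp Require Import all_boot all_order all_algebra.
From mathcomp Require Import finmap.
Set Implicit Arguments. Unset Strict Implicit. Unset Printing Implicit Defensive.
Import Order.TTheory GRing.Theory Num.Theory.
Local Open Scope ring_scope.
Local Open Scope fset_scope.

Section Grassmann.
Variable F : fieldType.

(* Basis monomials of the unital Grassmann algebra E: finite sets S of
   generator indices, S = {i_1 < ... < i_r} |-> e_{i_1} ... e_{i_r}.
   CONVENTION: index i : nat stands for the paper's generator e_{i+1}. *)
Notation gmon := {fset nat}.

Record grass := Grass { gterms : seq (gmon * F) }.

Definition gcoef (x : grass) (S : gmon) : F :=
  \sum_(p <- gterms x) (if p.1 == S then p.2 else 0).

Definition gzero (x : grass) : Prop := forall S, gcoef x S = 0.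

(* Sign of e_S * e_T (S, T disjoint): (-1)^#{(s,t) in S x T | t < s}. *)
Definition gsign (S T : gmon) : F :=
  (-1) ^+ (\sum_(s <- enum_fset S) \sum_(t <- enum_fset T) (t < s))%N.

Definition gone : grass := Grass [:: (fset0, 1)].
Definition gadd (x y : grass) : grass := Grass (gterms x ++ gterms y).
Definition gscale (c : F) (x : grass) : grass :=
  Grass [seq (p.1, c * p.2) | p <- gterms x].
(* bilinear extension of e_S e_T = 0 if S,T meet, sign(S,T) e_{S u T} otherwise *)
Definition gmul (x y : grass) : grass :=
  Grass [seq (p.1 `|` q.1,
              if fdisjoint p.1 q.1 then gsign p.1 q.1 * p.2 * q.2 else 0)
        | p : gmon * F <- gterms x, q : gmon * F <- gterms y].

Definition homog (deg : nat -> nat) (d : nat) (x : grass) : Prop :=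
  forall S, gcoef x S != 0 -> (\sum_(i <- enum_fset S) deg i)%N = d.

(* E^infty : ||e_i|| = 1 for i odd, 0 for i even (paper indexing, i >= 1). *)
Definition deg_inf (i : nat) : nat := if odd i.+1 then 1%N else 0%N.
(* E^{k*} : ||e_i|| = 1 for 1 <= i <= k, 0 otherwise (paper indexing). *)
Definition deg_kstar (k : nat) (i : nat) : nat := if (i.+1 <= k)%N then 1%N else 0%N.

(* Polynomials of the free algebra on variables of type X, given by their
   coefficient function on words (monomials). *)
Definition fpoly (X : Type) := seq X -> F.

Definition gword (X : Type) (s : X -> grass) (w : seq X) : grass :=
  foldr (fun x acc => gmul (s x) acc) gone w.

Definition multilin (X : eqType) (vs : seq X) (f : fpoly X) : Prop :=
  forall w, f w != 0 -> perm_eq w vs.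

Definition evalp (X : eqType) (vs : seq X) (f : fpoly X) (s : X -> grass) : grass :=
  foldr gadd (Grass [::]) [seq gscale (f w) (gword s w) | w <- permutations vs].

(* Ordinary variables x_1, x_2, ... are nats (x_i |-> i). *)
Definition Vn_vars (n : nat) : seq nat := iota 1 n.
Definition inVn (n : nat) (f : fpoly nat) : Prop := multilin (Vn_vars n) f.
Definition isTE (n : nat) (f : fpoly nat) : Prop :=
  forall s : nat -> grass, gzero (evalp (Vn_vars n) f s).

(* Graded variables: (d, j) is x^d_j for d >= 1, and z_j for d = 0;
   the Z-degree alpha of (d, j) is d. *)
Definition gvar := (nat * nat)%type.
Definition alpha (x : gvar) : nat := x.1.

(* variables z_1..z_m, x^1_1..x^1_{l_1}, ..., x^t_1..x^t_{l_t} with l = [l_1;..;l_t] *)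
Definition Vml_vars (m : nat) (l : seq nat) : seq gvar :=
  [seq (0%N, j) | j <- iota 1 m] ++
  flatten [seq [seq (d.+1, j) | j <- iota 1 (nth 0%N l d)] | d <- iota 0 (size l)].
Definition inVml (m : nat) (l : seq nat) (g : fpoly gvar) : Prop :=
  multilin (Vml_vars m l) g.
Definition isTZ (deg : nat -> nat) (m : nat) (l : seq nat) (g : fpoly gvar) : Prop :=
  forall s : gvar -> grass, (forall x, homog deg (alpha x) (s x)) ->
    gzero (evalp (Vml_vars m l) g s).

Fixpoint psi_aux (l : seq nat) (d i : nat) : gvar :=
  match l with
  | [::] => (0%N, i)
  | a :: l' => if (i <= a)%N then (d, i) else psi_aux l' d.+1 (i - a)
  end.
Definition psi_var (l : seq nat) (i : nat) : gvar := psi_aux l 1 i.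

Definition psi (l : seq nat) (n : nat) (f : fpoly nat) : fpoly gvar :=
  fun w => \sum_(u <- permutations (Vn_vars n) | map (psi_var l) u == w) f u.

End Grassmann.

(* Main.v *)
Require Import Defs.
From HB Require Import structures.
From mathcomp Require Import all_boot all_order all_algebra.
From mathcomp Require Import finmap ring zify.
From Stdlib Require Import FunctionalExtensionality.
Import Order.TTheory GRing.Theory Num.Theory.
Set Implicit Arguments. Unset Strict Implicit. Unset Printing Implicit Defensive.

Local Close Scope fset_scope.
Local Close Scope ring_scope.
Local Open Scope ring_scope.
Local Open Scope fset_scope.

Section G.
Variable F : fieldType.
Notation grass := (grass F).
Implicit Types x y z : grass.
Implicit Types A B C S T U : {fset nat}.

Definition geqv x y := forall S, gcoef x S = gcoef y S.
Lemma geqv_refl x : geqv x x. Proof. by []. Qed.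
Lemma geqv_sym x y : geqv x y -> geqv y x. Proof. by move=> h S; rewrite h. Qed.
Lemma geqv_trans x y z : geqv x y -> geqv y z -> geqv x z.
Proof. by move=> h1 h2 S; rewrite h1 h2. Qed.

Lemma sum_pred1_seq (I : eqType) (D : seq I) (a : I) (G : I -> F) :
  uniq D -> a \in D -> \sum_(A <- D) (if a == A then G A else 0) = G a.
Proof.
elim: D => // b D IH /= /andP[bD uD]; rewrite in_cons big_cons.
case: (eqVneq a b) => [->|ab] /=.
  rewrite big1_seq ?addr0 // => A /andP[_ AD].
  by case: eqP => // eA; move: bD; rewrite eA AD.
by move=> aD; rewrite add0r IH.
Qed.

Lemma sum_pred1_seq0 (I : eqType) (D : seq I) (a : I) (G : I -> F) :
  a \notin D -> \sum_(A <- D) (if a == A then G A else 0) = 0.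
Proof.
move=> aD; rewrite big1_seq // => A /andP[_ AD].
by case: eqP => // eA; move: aD; rewrite eA AD.
Qed.

Definition mulc A B S : F :=
  if A `|` B == S then (if fdisjoint A B then gsign F A B else 0) else 0.

Lemma gcoef_mul x y S :
  gcoef (gmul x y) S = \sum_(p <- gterms x) \sum_(q <- gterms y) p.2 * q.2 * mulc p.1 q.1 S.
Proof.
rewrite /gcoef /gmul /= big_allpairs_dep /=; apply: eq_bigr => p _; apply: eq_bigr => q _.
rewrite /mulc; case: (_ == S); rewrite ?mulr0 //.
by case: ifP => _; rewrite ?mulr0 // [RHS]mulrC mulrA.
Qed.

Lemma gterms_rep x (H : {fset nat} -> F) (D : seq {fset nat}) :
  uniq D -> (forall p, p \in gterms x -> p.1 \in D) ->
  \sum_(p <- gterms x) p.2 * H p.1 = \sum_(A <- D) gcoef x A * H A.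
Proof.
move=> uD hD.
transitivity (\sum_(A <- D) \sum_(p <- gterms x) (if p.1 == A then p.2 * H A else 0)).
  rewrite exchange_big /=; apply: eq_big_seq => p px.
  by rewrite (sum_pred1_seq (fun A => p.2 * H A)) // hD.
apply: eq_bigr => A _; rewrite /gcoef mulr_suml; apply: eq_bigr => p _.
by case: ifP; rewrite ?mul0r.
Qed.

Definition supp2 x y := undup (map fst (gterms x ++ gterms y)).
Lemma supp2_uniq x y : uniq (supp2 x y). Proof. exact: undup_uniq. Qed.
Lemma supp2_l x y p : p \in gterms x -> p.1 \in supp2 x y.
Proof. by move=> px; rewrite mem_undup map_f // mem_cat px. Qed.
Lemma supp2_r x y p : p \in gterms y -> p.1 \in supp2 x y.
Proof. by move=> px; rewrite mem_undup map_f // mem_cat px orbT. Qed.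

Lemma gmul_geql x x' y : geqv x x' -> geqv (gmul x y) (gmul x' y).
Proof.
move=> h S; rewrite !gcoef_mul.
pose H A := \sum_(q <- gterms y) q.2 * mulc A q.1 S.
have E z : \sum_(p <- gterms z) \sum_(q <- gterms y) p.2 * q.2 * mulc p.1 q.1 S
   = \sum_(p <- gterms z) p.2 * H p.1.
  by apply: eq_bigr => p _; rewrite mulr_sumr; apply: eq_bigr => q _; rewrite mulrA.
rewrite !E (@gterms_rep x H (supp2 x x')) ?supp2_uniq //; last by move=> p; apply: supp2_l.
rewrite (@gterms_rep x' H (supp2 x x')) ?supp2_uniq //; last by move=> p; apply: supp2_r.
by apply: eq_bigr => A _; rewrite h.
Qed.

Lemma gmul_geqr x y y' : geqv y y' -> geqv (gmul x y) (gmul x y').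
Proof.
move=> h S; rewrite !gcoef_mul.
pose H B := \sum_(p <- gterms x) p.2 * mulc p.1 B S.
have E z : \sum_(p <- gterms x) \sum_(q <- gterms z) p.2 * q.2 * mulc p.1 q.1 S
   = \sum_(q <- gterms z) q.2 * H q.1.
  rewrite exchange_big; apply: eq_bigr => q _; rewrite mulr_sumr; apply: eq_bigr => p _.
  by rewrite mulrA (mulrC q.2).
rewrite !E (@gterms_rep y H (supp2 y y')) ?supp2_uniq //; last by move=> p; apply: supp2_l.
rewrite (@gterms_rep y' H (supp2 y y')) ?supp2_uniq //; last by move=> p; apply: supp2_r.
by apply: eq_bigr => A _; rewrite h.
Qed.

Lemma gmul_geq x x' y y' : geqv x x' -> geqv y y' -> geqv (gmul x y) (gmul x' y').
Proof. by move=> h1 h2; apply: geqv_trans (gmul_geql _ h1) (gmul_geqr _ h2). Qed.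


Section BigF.
Variables (R : Type) (idx : R) (op : Monoid.com_law idx).
Lemma big_fsetU_dis (G : nat -> R) (A B : {fset nat}) : fdisjoint A B ->
  \big[op/idx]_(s <- A `|` B) G s = op (\big[op/idx]_(s <- A) G s) (\big[op/idx]_(s <- B) G s).
Proof.
move=> dAB; rewrite -big_cat; apply: perm_big; apply: uniq_perm.
- exact: fset_uniq.
- rewrite cat_uniq !fset_uniq /= andbT; apply/hasPn => x xB /=.
  by apply/negP => xA; move/fdisjointP: dAB => /(_ x xA); rewrite xB.
- by move=> x; rewrite mem_cat in_fsetU.
Qed.
Lemma big_imfset_inj (h : nat -> nat) (G : nat -> R) (A : {fset nat}) : injective h ->
  \big[op/idx]_(s <- h @` A) G s = \big[op/idx]_(s <- A) G (h s).
Proof.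
move=> hi; rewrite -(big_map h xpredT); apply: perm_big; apply: uniq_perm.
- exact: fset_uniq.
- by rewrite map_inj_uniq ?fset_uniq.
- move=> x; apply/imfsetP/mapP => [[y yA ->]|[y yA ->]]; by exists y.
Qed.
End BigF.

Definition cnt A B := (\sum_(s <- A) \sum_(t <- B) (t < s))%N.
Lemma gsignE A B : gsign F A B = (-1) ^+ cnt A B. Proof. by []. Qed.

Lemma cntUl A B C : fdisjoint A B -> cnt (A `|` B) C = (cnt A C + cnt B C)%N.
Proof. by move=> d; rewrite /cnt big_fsetU_dis. Qed.
Lemma cntUr A B C : fdisjoint B C -> cnt A (B `|` C) = (cnt A B + cnt A C)%N.
Proof.
by move=> d; rewrite /cnt -big_split; apply: eq_bigr => s _; rewrite big_fsetU_dis.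
Qed.
Lemma gsignUl A B C : fdisjoint A B -> gsign F (A `|` B) C = gsign F A C * gsign F B C.
Proof. by move=> d; rewrite !gsignE cntUl // exprD. Qed.
Lemma gsignUr A B C : fdisjoint B C -> gsign F A (B `|` C) = gsign F A B * gsign F A C.
Proof. by move=> d; rewrite !gsignE cntUr // exprD. Qed.

Lemma assoc_id A B C S :
  (if fdisjoint A B then gsign F A B else 0) * mulc (A `|` B) C S =
  (if fdisjoint B C then gsign F B C else 0) * mulc A (B `|` C) S.
Proof.
rewrite /mulc fdisjointUX fdisjointXU -fsetUA.
case AB: (fdisjoint A B); case AC: (fdisjoint A C); case BC: (fdisjoint B C);
  rewrite /= ?mul0r ?mulr0 //; case: ifP => _; rewrite ?mulr0 //.
rewrite gsignUl // gsignUr //; ring.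
Qed.

Lemma gmulA x y z : geqv (gmul (gmul x y) z) (gmul x (gmul y z)).
Proof.
move=> S; rewrite !gcoef_mul /= big_allpairs_dep /=; apply: eq_bigr => p _.
rewrite big_allpairs_dep /=; apply: eq_bigr => q _; apply: eq_bigr => r _.
transitivity (p.2 * q.2 * r.2 * ((if fdisjoint p.1 q.1 then gsign F p.1 q.1 else 0) * mulc (p.1 `|` q.1) r.1 S)).
  by case: ifP => _; ring.
by rewrite assoc_id; case: ifP => _; ring.
Qed.

Definition gsing A (c : F) : grass := Grass [:: (A, c)].

Lemma gsign0l B : gsign F fset0 B = 1.
Proof.
have e : enum_fset (fset0 : {fset nat}) = [::] by apply: size0nil; rewrite cardfs0.
by rewrite gsignE /cnt e big_nil.
Qed.

Lemma gmul1l x : geqv (gmul (gone F) x) x.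
Proof.
move=> S; rewrite gcoef_mul big_cons big_nil addr0 /gcoef; apply: eq_bigr => q _.
cbn [fst snd]; rewrite /mulc fset0U fdisjoint0X gsign0l.
by case: eqP => _; rewrite ?mulr0 ?mul1r ?mulr1.
Qed.

Lemma cnt_sym A B : fdisjoint A B -> (cnt A B + cnt B A = size A * size B)%N.
Proof.
move=> d; rewrite /cnt [X in (_ + X)%N]exchange_big -big_split.
rewrite -sum1_size big_distrl; apply: eq_big_seq => s sA.
rewrite -big_split; transitivity (\sum_(t <- B) 1)%N; last by rewrite sum1_size; exact: (esym (mul1n _)).
apply: eq_big_seq => t tB.
have st : s != t by apply/eqP => e; move/fdisjointP: d => /(_ s sA); rewrite e tB.
by case: ltngtP st.
Qed.

Lemma gsign_sym A U : fdisjoint A U -> ~~ odd (size U) -> gsign F A U = gsign F U A.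
Proof.
move=> d ev; have h : odd (cnt A U) = odd (cnt U A).
  have := congr1 odd (cnt_sym d); rewrite oddD oddM (negbTE ev) andbF.
  by case: (odd (cnt A U)); case: (odd (cnt U A)).
by rewrite !gsignE -[LHS]signr_odd -[RHS]signr_odd h.
Qed.

Lemma gcentral x U : ~~ odd (size U) -> geqv (gmul x (gsing U 1)) (gmul (gsing U 1) x).
Proof.
move=> ev S; rewrite !gcoef_mul big_cons big_nil addr0; apply: eq_bigr => p _.
rewrite big_cons big_nil addr0; cbn [fst snd].
rewrite /mulc [U `|` _]fsetUC [fdisjoint U _]fdisjoint_sym.
case: ifP => _; rewrite ?mulr0 //; case: ifP => d; rewrite ?mulr0 //.
rewrite (gsign_sym d ev); ring.
Qed.


End G.

Local Close Scope fset_scope.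
Local Close Scope ring_scope.
Local Open Scope ring_scope.
Local Open Scope fset_scope.

Section G.
Variable F : fieldType.
Notation grass := (grass F).
Implicit Types x y z : grass.
Implicit Types A B C S T U : {fset nat}.
Section Map.
Variable h : nat -> nat.
Hypothesis hm : forall a b, (h a < h b)%N = (a < b)%N.
Lemma h_inj : injective h.
Proof.
by move=> a b e; apply/eqP; rewrite eqn_leq (leqNgt a b) (leqNgt b a) -(hm b a) -(hm a b) e ltnn.
Qed.

Definition gmap x : grass := Grass [seq (h @` p.1, p.2) | p <- gterms x].

Lemma disj_im A B : fdisjoint (h @` A) (h @` B) = fdisjoint A B.
Proof.
apply/fdisjointP/fdisjointP => H a.
  by move=> aA; have := H (h a); rewrite !(mem_imfset _ _ h_inj) => /(_ aA).
move=> /imfsetP [b bA ->]; rewrite (mem_imfset _ _ h_inj); exact: H.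
Qed.

Lemma gsign_im A B : gsign F (h @` A) (h @` B) = gsign F A B.
Proof.
rewrite !gsignE /cnt big_imfset_inj //; last exact: h_inj.
congr (_ ^+ _); apply: eq_bigr => s _; rewrite big_imfset_inj //; last exact: h_inj.
by apply: eq_bigr => t _; rewrite hm.
Qed.

Lemma gmap_mul x y : gmap (gmul x y) = gmul (gmap x) (gmap y).
Proof.
case: x => xs; case: y => ys; rewrite /gmap /gmul; cbn [gterms]; congr Grass.
rewrite map_allpairs allpairs_mapl allpairs_mapr; apply: eq_allpairs => p q; cbn [fst snd].
by rewrite imfsetU disj_im gsign_im.
Qed.

Lemma gmap_one : gmap (gone F) = gone F.
Proof. by rewrite /gmap /gone; cbn [gterms map fst snd]; rewrite imfset0. Qed.

Lemma gword_gmap (X : Type) (s : X -> grass) w :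
  gword (fun i => gmap (s i)) w = gmap (gword s w).
Proof. by elim: w => [|a w IH] /=; rewrite ?gmap_one // IH gmap_mul. Qed.

Lemma imU_eq A B T : (forall j, h j \notin T) ->
  (h @` B `|` T == h @` A `|` T) = (B == A).
Proof.
move=> hT; apply/eqP/eqP => [e|->] //.
have sub (C D : {fset nat}) : h @` C `|` T = h @` D `|` T -> forall v : nat, v \in C -> v \in D.
  move=> E v vC; have : h v \in h @` D `|` T by rewrite -E in_fsetU (mem_imfset _ _ h_inj) vC.
  by rewrite in_fsetU (negbTE (hT v)) orbF (mem_imfset _ _ h_inj).
apply/fsetP => v; apply/idP/idP; apply: sub => //.
Qed.

Lemma disj_imT A T : (forall j, h j \notin T) -> fdisjoint (h @` A) T.
Proof. by move=> hT; apply/fdisjointP => a /imfsetP [b _ ->]. Qed.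

Lemma gcoef_extract X T c A : (forall j, h j \notin T) ->
  gcoef (gmul (gmap X) (gsing T c)) (h @` A `|` T) = gcoef X A * (gsign F (h @` A) T * c).
Proof.
move=> hT; rewrite gcoef_mul /gmap; cbn [gterms]; rewrite big_map /gcoef mulr_suml.
apply: eq_bigr => p _; rewrite big_cons big_nil addr0; cbn [fst snd].
rewrite /mulc imU_eq // disj_imT //.
by case: eqP => [->|_]; rewrite ?mulr0 ?mul0r //; ring.
Qed.

End Map.

Lemma gword_geq (X : Type) (s s' : X -> grass) w :
  (forall i, geqv (s i) (s' i)) -> geqv (gword s w) (gword s' w).
Proof. by move=> H; elim: w => [|a w IH] //=; apply: gmul_geq. Qed.

Lemma gword_eq_in (X : eqType) (s s' : X -> grass) w :
  (forall i, i \in w -> s i = s' i) -> gword s w = gword s' w.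
Proof.
elim: w => [|a w IH] H //=; rewrite H ?mem_head // IH // => i iw.
by apply: H; rewrite in_cons iw orbT.
Qed.

Lemma gword_map_seq (X Y : Type) (s : Y -> grass) (f : X -> Y) w :
  gword s (map f w) = gword (fun i => s (f i)) w.
Proof. by elim: w => [|a w IH] //=; rewrite IH. Qed.

Section Central.
Variable X : eqType.
Variable E : X -> grass.
Hypothesis Ec : forall i x, geqv (gmul x (E i)) (gmul (E i) x).

Lemma gword_rem a w : a \in w -> geqv (gword E w) (gmul (E a) (gword E (rem a w))).
Proof.
elim: w => [|b w IH] //; rewrite in_cons.
case: (eqVneq a b) => [->|ab] H; first by rewrite /= eqxx; exact: geqv_refl.
rewrite /= eq_sym (negbTE ab) /=.
apply: geqv_trans (gmul_geqr _ (IH H)) _.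
apply: geqv_trans (geqv_sym (gmulA _ _ _)) _.
apply: geqv_trans (gmul_geql _ (Ec a (E b))) _.
exact: gmulA.
Qed.

Lemma gword_perm w w' : perm_eq w w' -> geqv (gword E w) (gword E w').
Proof.
elim: w w' => [|a w IH] w' H.
  by move: H; rewrite perm_sym => /perm_nilP ->; apply: geqv_refl.
have aw' : a \in w' by rewrite -(perm_mem H) mem_head.
have H2 : perm_eq w (rem a w').
  by rewrite -(perm_cons a); apply: perm_trans H (perm_to_rem aw').
apply: geqv_trans _ (geqv_sym (gword_rem aw')).
exact: gmul_geqr (IH _ H2).
Qed.

Lemma gword_split (t : X -> grass) w :
  geqv (gword (fun i => gmul (t i) (E i)) w) (gmul (gword t w) (gword E w)).
Proof.
elim: w => [|a w IH] /=; first exact: geqv_sym (gmul1l _).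
apply: geqv_trans (gmul_geqr _ IH) _.
apply: geqv_trans (gmulA _ _ _) _.
apply: geqv_trans _ (geqv_sym (gmulA _ _ _)).
apply: gmul_geqr.
apply: geqv_trans (geqv_sym (gmulA _ _ _)) _.
apply: geqv_trans _ (gmulA _ _ _).
apply: gmul_geql.
exact: geqv_sym (Ec a _).
Qed.
End Central.

End G.

Local Close Scope fset_scope.
Local Close Scope ring_scope.


Definition Xblocks (l : seq nat) (d : nat) : seq gvar :=
  flatten [seq [seq (d + k, j) | j <- iota 1 (nth 0 l k)] | k <- iota 0 (size l)].

Lemma psi_map l m d :
  map (psi_aux l d) (iota 1 (sumn l + m)) = Xblocks l d ++ [seq (0, j) | j <- iota 1 m].
Proof.
elim: l d => [|a l IH] d /=; first by rewrite add0n.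
rewrite -addnA iotaD map_cat.
have -> : map (psi_aux (a :: l) d) (iota 1 a) = [seq (d + 0, j) | j <- iota 1 a].
  apply/eq_in_map => i; rewrite mem_iota /= addn0 => /andP[_ ia].
  by rewrite ltnS in ia; rewrite ia.
rewrite (_ : 1 + a = a + 1)%N; last by rewrite addnC.
rewrite iotaDl -map_comp.
have -> : map (psi_aux (a :: l) d \o addn a) (iota 1 (sumn l + m)) =
          map (psi_aux l d.+1) (iota 1 (sumn l + m)).
  apply/eq_in_map => i; rewrite mem_iota /= => /andP[i1 _].
  rewrite /comp /=; have -> : (a + i <= a)%N = false by lia.
  by rewrite (_ : a + i - a = i)%N //; lia.
rewrite IH /Xblocks /= catA; congr (_ ++ _); congr (_ ++ _).
have -> : iota 1 (size l) = map (addn 1) (iota 0 (size l)) by rewrite -iotaDl.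
rewrite -map_comp; congr flatten; apply: eq_map => k; rewrite /comp /=.
by rewrite add1n addSnnS.
Qed.

Definition inv_aux (l : seq nat) (d : nat) (x : gvar) : nat :=
  if x.1 == 0%N then (sumn l + x.2)%N else (sumn (take (x.1 - d) l) + x.2)%N.

Lemma inv_psi l d i : (0 < d)%N -> (0 < i)%N ->
  inv_aux l d (psi_aux l d i) = i /\ ((psi_aux l d i).1 == 0%N \/ (d <= (psi_aux l d i).1)%N).
Proof.
elim: l d i => [|a l IH] d i d0 i0 /=; first by rewrite /inv_aux /= add0n; split=> //; left.
case: ifP => ia.
  rewrite /inv_aux /= subnn take0 /= add0n; split => //; last by right.
  by case: eqP => // e; rewrite e in d0.
have i0' : (0 < i - a)%N by lia.
have [IH1 IH2] := IH d.+1 (i - a) (ltn0Sn _) i0'.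
move: IH1 IH2; set r := psi_aux l d.+1 (i - a) => IH1 IH2.
split; last by case: IH2 => [->|H]; [left|right; apply: ltnW].
move: IH1; rewrite /inv_aux; case: eqP => [e|ne] /=.
  by move=> H; rewrite -addnA H; lia.
have r1 : (d < r.1)%N by case: IH2 => // /eqP.
rewrite (_ : r.1 - d = (r.1 - d.+1).+1)%N; last by lia.
by move=> H; rewrite /= -addnA H; lia.
Qed.

Lemma Vml_perm m l :
  perm_eq (map (psi_var l) (iota 1 (sumn l + m))) (Vml_vars m l).
Proof.
rewrite /psi_var psi_map /Vml_vars perm_catC /Xblocks.
rewrite (_ : flatten _ = flatten [seq [seq (d.+1, j) | j <- iota 1 (nth 0 l d)] | d <- iota 0 (size l)]) //.

Qed.

Local Close Scope fset_scope.
Local Close Scope ring_scope.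
Local Open Scope fset_scope.
Local Open Scope ring_scope.

Section Ev.
Variable F : fieldType.
Lemma gcoef_add (x y : grass F) S : gcoef (gadd x y) S = gcoef x S + gcoef y S.
Proof. by rewrite /gcoef /gadd big_cat. Qed.
Lemma gcoef_scale c (x : grass F) S : gcoef (gscale c x) S = c * gcoef x S.
Proof.
rewrite /gcoef /gscale big_map mulr_sumr; apply: eq_bigr => p _; cbn [fst snd].
by case: ifP; rewrite ?mulr0.
Qed.
Lemma gcoef_nil S : gcoef (Grass (F:=F) [::]) S = 0.
Proof. by rewrite /gcoef big_nil. Qed.

Lemma evalp_coef (X : eqType) (vs : seq X) (f : fpoly F X) s S :
  gcoef (evalp vs f s) S = \sum_(w <- permutations vs) f w * gcoef (gword s w) S.
Proof.
rewrite /evalp; elim: (permutations vs) => [|w ws IH] /=.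
  by rewrite big_nil gcoef_nil.
by rewrite gcoef_add gcoef_scale IH big_cons.
Qed.

Lemma gcoef_nz_term (x : grass F) S : gcoef x S != 0 -> exists2 p, p \in gterms x & p.1 = S.
Proof.
move=> H; case: (boolP (has (fun p => p.1 == S) (gterms x))) => [/hasP [p pin /eqP e]|hn].
  by exists p.
move: H; rewrite /gcoef big1_seq ?eqxx // => p /andP[_ pin].
by case: ifP => // e; move/hasPn: hn => /(_ p pin); rewrite e.
Qed.

Section Main.
Variables (m : nat) (l : seq nat).
Let n := (sumn l + m)%N.
Let vs := iota 1 n.
Let vm := Vml_vars m l.
Let psv := psi_var l.
Let psinv := inv_aux l 1.

Lemma psinv_psi i : (0 < i)%N -> psinv (psv i) = i.
Proof. by move=> i0; case: (inv_psi l (ltn0Sn 0) i0). Qed.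

Lemma vm_perm : perm_eq (map psv vs) vm.
Proof. exact: Vml_perm. Qed.

Lemma psi_in u : perm_eq u vs -> perm_eq (map psv u) vm.
Proof. by move=> H; apply: perm_trans (perm_map psv H) vm_perm. Qed.

Lemma in_vm x : x \in vm -> exists2 i, i \in vs & x = psv i.
Proof. by rewrite -(perm_mem vm_perm) => /mapP. Qed.

Lemma vs_pos i : i \in vs -> (0 < i)%N.
Proof. by rewrite mem_iota => /andP[]. Qed.

Lemma psi_psinv x : x \in vm -> psv (psinv x) = x.
Proof. by case/in_vm => i /vs_pos i0 ->; rewrite psinv_psi. Qed.

Lemma rearr (f : fpoly F nat) (c : seq gvar -> F) :
  \sum_(w <- permutations vm) psi l n f w * c w =
  \sum_(u <- permutations vs) f u * c (map psv u).
Proof.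
rewrite /psi.
transitivity (\sum_(w <- permutations vm) \sum_(u <- permutations (Vn_vars n))
    (if map psv u == w then f u * c w else 0)).
  apply: eq_bigr => w _; rewrite big_mkcond mulr_suml; apply: eq_bigr => u _.
  by case: ifP; rewrite ?mul0r.
rewrite exchange_big; apply: eq_big_seq => u uP.
rewrite (sum_pred1_seq (fun w => f u * c w)) //; first exact: permutations_uniq.
by rewrite mem_permutations; apply: psi_in; rewrite -mem_permutations.
Qed.

Lemma dirA (f : fpoly F nat) : inVn n f -> isTE n f ->
  inVml m l (psi l n f) /\ forall deg, isTZ deg m l (psi l n f).
Proof.
move=> fV fT; split.
  move=> w; apply: contraR => nw; rewrite /psi big1_seq // => u /andP[/eqP e uP].
  by move: nw; rewrite -e psi_in // -mem_permutations.
move=> deg s _ S; rewrite evalp_coef (rearr f (fun w => gcoef (gword s w) S)).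
transitivity (gcoef (evalp vs f (fun i => s (psv i))) S); last exact: fT.
rewrite evalp_coef; apply: eq_bigr => u _.
by rewrite gword_map_seq.
Qed.

Definition fB (g : fpoly F gvar) : fpoly F nat :=
  fun u => if perm_eq u vs then g (map psv u) else 0.

Lemma fB_inVn g : inVn n (fB g).
Proof. by move=> u; rewrite /fB; case: ifP => // _; rewrite eqxx. Qed.

Lemma fB_psi g : inVml m l g -> psi l n (fB g) = g.
Proof.
move=> gV; apply: functional_extensionality => w; rewrite /psi.
case: (boolP (perm_eq w vm)) => wP; last first.
  have -> : g w = 0 by apply/eqP; apply: contraR wP; apply: gV.
  rewrite big1_seq // => u /andP[/eqP e uP].
  by move: wP; rewrite -e psi_in // -mem_permutations.
pose u0 := map psinv w.
have u0P : u0 \in permutations vs.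
  rewrite mem_permutations.
  have vm' : perm_eq vm (map psv vs) by rewrite perm_sym vm_perm.
  have H := perm_map psinv (perm_trans wP vm').
  apply: perm_trans H _; rewrite -map_comp map_id_in // => i /vs_pos; exact: psinv_psi.
have wu0 : map psv u0 = w.
  rewrite -map_comp map_id_in // => x xw; apply: psi_psinv; by rewrite -(perm_mem wP).
transitivity (\sum_(u <- permutations vs) (if u0 == u then g w else 0)).
  rewrite big_mkcond; apply: eq_big_seq => u uP.
  have -> : (map psv u == w) = (u0 == u).
    apply/eqP/eqP => [e|e]; last by rewrite -e wu0.
    rewrite /u0 -e -map_comp map_id_in // => i iu.
    apply: psinv_psi; apply: vs_pos; move: uP; rewrite mem_permutations => /perm_mem <-//.
  by rewrite /fB; case: eqP => // <-; rewrite -mem_permutations u0P wu0.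
by rewrite (sum_pred1_seq (fun _ => g w)) //; exact: permutations_uniq.
Qed.

Section Core.
Variables (deg h : nat -> nat) (U : nat -> {fset nat}).
Hypothesis hm : forall a b, (h a < h b)%N = (a < b)%N.
Hypothesis hdeg : forall j, deg (h j) = 0%N.
Hypothesis Uev : forall i, ~~ odd (size (U i)).
Hypothesis Uh : forall i j, h j \notin U i.
Hypothesis Udis : forall i j, i \in vs -> j \in vs -> i != j -> fdisjoint (U i) (U j).
Hypothesis Udeg : forall i, i \in vs -> (\sum_(j <- U i) deg j)%N = (psv i).1.

Let E i := gsing (U i) (1 : F).
Definition Tu (w : seq nat) := foldr (fun j acc => U j `|` acc) fset0 w.

Lemma Tu_h w j : h j \notin Tu w.
Proof. by elim: w => [|a w IH] /=; rewrite ?in_fset0 // in_fsetU negb_or IH Uh. Qed.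

Lemma Tu_dis a w : a \in vs -> a \notin w -> {subset w <= vs} -> fdisjoint (U a) (Tu w).
Proof.
move=> av; elim: w => [|b w IH] /=; first by rewrite fdisjointX0.
rewrite in_cons negb_or => /andP[ab aw] sub; rewrite fdisjointXU IH ?andbT //.
  by apply: Udis => //; apply: sub; rewrite mem_head.
by move=> i iw; apply: sub; rewrite in_cons iw orbT.
Qed.

Lemma word_sing w : uniq w -> {subset w <= vs} ->
  exists2 c, c != 0 & gword E w = gsing (Tu w) c.
Proof.
elim: w => [|a w IH] /=; first by move=> _ _; exists 1; rewrite ?oner_eq0.
move=> /andP[aw uw] sub.
have sub' : {subset w <= vs} by move=> i iw; apply: sub; rewrite in_cons iw orbT.
have [c c0 ->] := IH uw sub'.
have d : fdisjoint (U a) (Tu w) by apply: Tu_dis => //; apply: sub; rewrite mem_head.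
exists (gsign F (U a) (Tu w) * 1 * c).
  by rewrite mulr1 mulf_neq0 // gsignE signr_eq0.
by rewrite /gmul /E /gsing /= d.
Qed.

Definition s' (s : nat -> grass F) (x : gvar) : grass F :=
  if x \in vm then gmul (gmap h (s (psinv x))) (E (psinv x)) else Grass [::].

Lemma s'_homog s x : homog deg (alpha x) (s' s x).
Proof.
move=> S; rewrite /s'; case: ifP => xv; last by rewrite gcoef_nil eqxx.
have [i iv ei] := in_vm xv.
move=> H; apply/eqP; apply: contraR H => ne.
rewrite gcoef_mul /gmap; cbn [gterms]; rewrite big_map big1 // => p _.
rewrite big_cons big_nil addr0 /E /gsing; cbn [fst snd]; rewrite /mulc.
case: eqP => [e|_]; last by rewrite mulr0.
exfalso; move/eqP: ne; apply; rewrite -e.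
rewrite big_fsetU_dis; last by apply: disj_imT => //.
rewrite big_imfset_inj; last exact: h_inj.
rewrite big1 ?add0n; last by move=> j _; rewrite hdeg.
by rewrite ei psinv_psi ?Udeg // vs_pos.
Qed.

Lemma dirB_core g : inVml m l g -> isTZ deg m l g -> isTE n (fB g).
Proof.
move=> gV gT s A.
have Ec i x : geqv (gmul x (E i)) (gmul (E i) x) by apply: gcentral.
have [c c0 Ew] := word_sing (iota_uniq 1 n) (fun i (H : i \in vs) => H).
pose B := h @` A `|` Tu vs.
have := gT (s' s) (fun x => @s'_homog s x) B.
rewrite evalp_coef -{1}(fB_psi gV) rearr.
have key u : u \in permutations vs ->
    gcoef (gword (s' s) (map psv u)) B = gcoef (gword s u) A * (gsign F (h @` A) (Tu vs) * c).
  rewrite mem_permutations => uP.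
  rewrite gword_map_seq (@gword_eq_in F _ _ (fun i => gmul (gmap h (s i)) (E i))); last first.
    move=> i iu; have iv : i \in vs by rewrite -(perm_mem uP).
    rewrite /s' (_ : psv i \in vm) ?psinv_psi ?(vs_pos iv) //.
    by rewrite -(perm_mem vm_perm) map_f.
  rewrite (gword_split Ec) (gmul_geqr _ (gword_perm Ec uP)).
  rewrite Ew (gword_gmap hm) gcoef_extract //; exact: Tu_h.
rewrite (eq_big_seq (fun u => fB g u * gcoef (gword s u) A * (gsign F (h @` A) (Tu vs) * c))); last first.
  by move=> u uP; rewrite key // mulrA.
rewrite -mulr_suml -evalp_coef => /eqP.
rewrite mulf_eq0 => /orP[/eqP //|].
by rewrite mulf_eq0 (negbTE c0) orbF gsignE signr_eq0.
Qed.
End Core.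
End Main.
End Ev.

Local Close Scope fset_scope.
Local Close Scope ring_scope.
Local Open Scope fset_scope.

Lemma sum_fseq (s : seq nat) (Fn : nat -> nat) : uniq s ->
  (\sum_(j <- [fset x in s]) Fn j = \sum_(j <- s) Fn j)%N.
Proof.
move=> us; apply: perm_big; apply: uniq_perm; [exact: fset_uniq|exact: us|].
by move=> x; rewrite in_fset.
Qed.

Section Inst.
Variables (F : fieldType) (m : nat) (l : seq nat).
Let n := (sumn l + m)%N.
Let vs := iota 1 n.
Let d i := (psi_var l i).1.
Definition off (i : nat) := (\sum_(1 <= j < i) d j)%N.
Variables (deg h G P : nat -> nat).
Hypothesis hm : forall a b, (h a < h b)%N = (a < b)%N.
Hypothesis hdeg : forall j, deg (h j) = 0%N.
Hypothesis Ginj : injective G.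
Hypothesis Pinj : forall i j, P i = P j -> i = j.
Hypothesis HGP : forall i j r, i \in vs -> j \in vs -> (r < d i)%N -> G (off i + r) != P j.
Hypothesis HhG : forall i r j, i \in vs -> (r < d i)%N -> h j != G (off i + r).
Hypothesis HhP : forall i j, i \in vs -> h j != P i.
Hypothesis HG : forall i r, i \in vs -> (r < d i)%N -> deg (G (off i + r)) = 1%N.
Hypothesis HP : forall i, i \in vs -> deg (P i) = 0%N.

Definition blk i := [seq G (off i + r) | r <- iota 0 (d i)] ++ (if odd (d i) then [:: P i] else [::]).
Definition Uf i : {fset nat} := if i \in vs then [fset x in blk i] else fset0.

Lemma off_lt i j r r' : i \in vs -> (i < j)%N -> (r < d i)%N -> (off i + r < off j + r')%N.
Proof.
move=> iv ij ri; have i1 : (1 <= i)%N by move: iv; rewrite mem_iota => /andP[].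
rewrite /off (big_cat_nat i1 (ltnW ij)) (big_ltn ij) /=; lia.
Qed.

Lemma blk_mem i x : x \in blk i ->
  (exists2 r, (r < d i)%N & x = G (off i + r)) \/ x = P i.
Proof.
rewrite mem_cat => /orP[/mapP [r rin ->]|]; first by left; exists r; move: rin; rewrite mem_iota.
by case: ifP => // _; rewrite mem_seq1 => /eqP ->; right.
Qed.

Lemma blk_uniq i : i \in vs -> uniq (blk i).
Proof.
move=> iv; rewrite cat_uniq map_inj_uniq ?iota_uniq; last by move=> a b /Ginj /addnI.
case: ifP => _ //=; rewrite andbT orbF; apply/mapP => [[r]].
rewrite mem_iota add0n => /andP[_ ri] e; move: (@HGP i i r iv iv ri); rewrite e eqxx //.
Qed.

Lemma Uev i : ~~ odd (size (Uf i)).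
Proof.
rewrite /Uf; case: ifP => iv; last by rewrite cardfs0.
rewrite card_fseq undup_id ?blk_uniq // size_cat size_map size_iota.
by case: ifP => o /=; rewrite ?addn0 ?addn1 /= ?o.
Qed.

Lemma Uh i j : h j \notin Uf i.
Proof.
rewrite /Uf; case: ifP => iv; last by rewrite in_fset0.
rewrite in_fset; apply/negP => /blk_mem [[r ri e]|e].
  by move: (@HhG i r j iv ri); rewrite e eqxx.
by move: (@HhP i j iv); rewrite e eqxx.
Qed.

Lemma Udis i j : i \in vs -> j \in vs -> i != j -> fdisjoint (Uf i) (Uf j).
Proof.
move=> iv jv ij; rewrite /Uf iv jv; apply/fdisjointP => x; rewrite !in_fset.
move=> /blk_mem [[r ri ->]|->]; apply/negP => /blk_mem [[r' ri' e]|e].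
- move/Ginj: e => e; case: (ltngtP i j) ij => // [lt|gt] _.
    by move: (off_lt r' iv lt ri); rewrite e ltnn.
  by move: (off_lt r jv gt ri'); rewrite e ltnn.
- by move: (@HGP i j r iv jv ri); rewrite e eqxx.
- by move: (@HGP j i r' jv iv ri'); rewrite e eqxx.
- by move/Pinj: e => e; rewrite e eqxx in ij.
Qed.

Lemma Udeg i : i \in vs -> (\sum_(j <- Uf i) deg j)%N = (psi_var l i).1.
Proof.
move=> iv; rewrite /Uf iv sum_fseq ?blk_uniq // big_cat big_map /=.
rewrite (eq_big_seq (fun _ => 1%N)); last by move=> r; rewrite mem_iota => /andP[_ ri]; rewrite (@HG i r).
rewrite sum1_size size_iota; case: ifP => _; rewrite ?big_nil ?addn0 //.
by rewrite big_cons big_nil (@HP i iv) !addn0.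
Qed.

Lemma dirB_inst (g : fpoly F gvar) : inVml m l g -> isTZ deg m l g -> isTE n (fB m l g).
Proof. exact: (dirB_core hm hdeg Uev Uh Udis Udeg). Qed.
End Inst.

Unset Implicit Arguments. Set Strict Implicit.
Local Close Scope fset_scope.
Local Close Scope ring_scope.
Local Open Scope ring_scope.

Lemma total_deg (m : nat) (l : seq nat) :
  (\sum_(1 <= j < (sumn l + m).+1) (psi_var l j).1 = \sum_(j < size l) j.+1 * nth 0 l j)%N.
Proof.
rewrite /index_iota subSS subn0 -(big_map (psi_var l) xpredT (fun x => x.1)).
rewrite (perm_big _ (Vml_perm m l)) /Vml_vars big_cat big_map big1 ?add0n //.
rewrite big_flatten big_map.
have -> : iota 0 (size l) = index_iota 0 (size l) by rewrite /index_iota subn0.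
rewrite big_mkord; apply: eq_bigr => d _; rewrite big_map.
rewrite (eq_bigr (fun _ => (1 * d.+1)%N)); last by move=> *; rewrite mul1n.
by rewrite -big_distrl /= sum1_size size_iota mulnC.
Qed.

Lemma off_bound (l : seq nat) m i : i \in iota 1 (sumn l + m) ->
  (off l i + (psi_var l i).1 <= \sum_(1 <= j < (sumn l + m).+1) (psi_var l j).1)%N.
Proof.
rewrite mem_iota => /andP[i1 iN]; rewrite /off.
rewrite (big_cat_nat i1 (ltnW iN)) (big_ltn iN) /=; lia.
Qed.

Lemma equiv_gen (F : fieldType) (m : nat) (l : seq nat) (deg : nat -> nat) :
  (forall g : fpoly F gvar, inVml m l g -> isTZ deg m l g -> isTE (sumn l + m) (fB m l g)) ->
  forall g : fpoly F gvar,
     (inVml m l g /\ isTZ deg m l g) <->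
     (exists f : fpoly F nat, [/\ inVn (sumn l + m) f, isTE (sumn l + m) f & psi l (sumn l + m) f = g]).
Proof.
move=> Hinst g; split => [[gV gT]|[f [fV fT <-]]].
  exists (fB m l g); split; [exact: fB_inVn | exact: Hinst | exact: fB_psi].
by have [A1 A2] := dirA fV fT; split => //; exact: A2.
Qed.

Theorem mainTheorem3 (F : fieldType) (k t m : nat) (l : seq nat) :
  [pchar F] =i pred0 -> (0 < k)%N -> (1 <= t <= k)%N -> size l = t ->
  let n := (sumn l + m)%N in
  (forall g : fpoly F gvar,
     (inVml m l g /\ isTZ deg_inf m l g) <->
     (exists f : fpoly F nat, [/\ inVn n f, isTE n f & psi l n f = g])) /\
  ((\sum_(j < t) j.+1 * nth 0 l j <= k)%N ->
   forall g : fpoly F gvar,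
     (inVml m l g /\ isTZ (deg_kstar k) m l g) <->
     (exists f : fpoly F nat, [/\ inVn n f, isTE n f & psi l n f = g])).
Proof.
move=> _ _ _ sl n; split.
  apply: equiv_gen => g.
  apply: (@dirB_inst F m l deg_inf (fun j => 2 * (j + n + 1) + 1)%N (fun x => 2 * x)%N (fun i => 2 * i + 1)%N).
  - by move=> a b; apply/idP/idP; lia.
  - by move=> j; rewrite /deg_inf addn1 /= oddM.
  - by move=> a b; lia.
  - by move=> a b; lia.
  - by move=> i j r _ _ _; apply/eqP => e; have := congr1 odd e; rewrite oddD !oddM.
  - by move=> i r j _ _; apply/eqP => e; have := congr1 odd e; rewrite oddD !oddM.
  - by move=> i j; rewrite mem_iota => /andP[_ iN]; apply/eqP; rewrite /n in iN; lia.
  - by move=> i r _ _; rewrite /deg_inf /= oddM.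
  - by move=> i _; rewrite /deg_inf addn1 /= oddM.
move=> Hk; apply: equiv_gen => g.
have B i r : i \in iota 1 (sumn l + m) -> (r < (psi_var l i).1)%N -> (off l i + r < k)%N.
  move=> iv ri; have := @off_bound l m i iv; rewrite total_deg sl; lia.
apply: (@dirB_inst F m l (deg_kstar k) (fun j => j + k + n + 1)%N id (fun i => k + i)%N).
- by move=> a b; apply/idP/idP; lia.
- by move=> j; rewrite /deg_kstar; case: leqP => //; lia.
- by [].
- by move=> a b; lia.
- by move=> i j r iv _ ri; have := B _ _ iv ri; apply: contraTneq => ->; lia.
- by move=> i r j iv ri; have := B _ _ iv ri; apply: contraTneq => <-; lia.
- by move=> i j; rewrite mem_iota => /andP[_ iN]; apply/eqP; rewrite /n in iN; lia.
- by move=> i r iv ri; have := B _ _ iv ri; rewrite /deg_kstar => ->.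
- by move=> i _; rewrite /deg_kstar; case: leqP => //; lia.
Qed.
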